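(* Let $a_1,\dots,a_t$ be positive integers with $\sum_{i=1}^t a_i=2b$ for an integer $b$. Consider the two-machine instance with three chains of jobs $j^0_1\prec\dots\prec j^0_t$, $j^1_1\prec\dots\prec j^1_{t+1}$, $j^2_1\prec\dots\prec j^2_{t+1}$ (no precedence constraints between different chains), where $j^0_i$ has processing time $a_i$ and every $j^1_i$ and $j^2_i$ has processing time $2b$. Then there is a subset $S\subseteq\{1,\dots,t\}$ with $\sum_{i\in S}a_i=\sum_{i\notin S}a_i$ if and only if this instance has a feasible non-preemptive schedule on two identical machines with makespan at most $(2t+3)b$.
   Context: A schedule assigns each job $j$ a start time $s_j\in\mathbb N$; it is feasible if $s_i+p_i\le s_j$ whenever $i\prec j$ and at every time $t$ at most two jobs $j$ satisfy $t\in[s_j,s_j+p_j)$. The makespan is $\max_j(s_j+p_j)$. *)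

(* Defs.v *)
From mathcomp Require Import all_boot.
Set Implicit Arguments. Unset Strict Implicit. Unset Printing Implicit Defensive.

Definition feasible2 (J : finType) (p : J -> nat) (prec : J -> J -> Prop)
  (s : J -> nat) : Prop :=
  (forall i j, prec i j -> s i + p i <= s j) /\
  (forall x : nat, #|[pred j | (s j <= x) && (x < s j + p j)]| <= 2).

Definition makespan_le (J : finType) (p : J -> nat) (s : J -> nat) (M : nat) : Prop :=
  forall j, s j + p j <= M.

(* Jobs of the instance: chain 0 = j^0_1..j^0_t (indices 'I_t),
   chain 1 = j^1_1..j^1_{t+1}, chain 2 = j^2_1..j^2_{t+1} (indices 'I_t.+1). *)
Definition job (t : nat) : finType := ('I_t + ('I_t.+1 + 'I_t.+1))%type.

Definition ptime (t b : nat) (a : 'I_t -> nat) (j : job t) : nat :=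
  match j with
  | inl i => a i
  | inr _ => 2 * b
  end.

Definition prec (t : nat) (j k : job t) : Prop :=
  match j, k with
  | inl i, inl i' => (i < i')%N
  | inr (inl i), inr (inl i') => (i < i')%N
  | inr (inr i), inr (inr i') => (i < i')%N
  | _, _ => False
  end.

(* Main.v *)
Require Import Defs.
From mathcomp Require Import all_boot zify.
Set Implicit Arguments. Unset Strict Implicit. Unset Printing Implicit Defensive.

Definition idle (u : nat -> nat) (T b x : nat) :=
  forall i, i <= T -> ~~ ((u i <= x) && (x < u i + 2*b)).

Section Chain.
Variables (u : nat -> nat) (T b : nat).
Hypothesis bpos : 0 < b.
Hypothesis hp : forall i j, i < j -> j <= T -> u i + 2*b <= u j.
Hypothesis hm : forall i, i <= T -> u i + 2*b <= (2*T+3)*b.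

Lemma L_gap d i : i + d <= T -> u i + 2*b*d <= u (i+d).
Proof.
elim: d => [|d IH] h; first by rewrite muln0 addn0 addn0.
have h1 := IH ltac:(lia). have h2 := hp (i:=i+d) (j:=i+d.+1) ltac:(lia) h.
rewrite mulnS; lia.
Qed.

Lemma L_lo i : i <= T -> 2*b*i <= u i.
Proof. move=> h; have := @L_gap i 0 ltac:(lia); rewrite add0n; lia. Qed.

Lemma L_hi i : i <= T -> u i <= 2*b*i + b.
Proof.
move=> h; have := @L_gap (T-i) i ltac:(lia); have := hm (leqnn T).
rewrite subnKC //.
have -> : T = i + (T - i) by lia.
move: (T - i) => d; rewrite mulnDr !mulnDl; move=> *; nia.
Qed.

Lemma F3 m r : b <= r < 2*b -> 2*b*m + r < (2*T+3)*b -> ~ idle u T b (2*b*m+r).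
Proof.
move=> hr hx hi.
have hmT : m <= T by nia.
have := hi m hmT; have := L_lo hmT; have := L_hi hmT.
move=> h1 h2; apply/negP/negPn/andP; split; lia.
Qed.

Lemma F1 z m m' : z < b -> m < m' -> 2*b*m' + z < (2*T+3)*b ->
  idle u T b (2*b*m+z) -> idle u T b (2*b*m'+z) -> False.
Proof.
move=> hz hmm hx i1 i2.
have hm' : m' <= T.+1 by nia.
have hmT : m <= T by lia.
have g := @L_gap (m'.-1 - m) m ltac:(lia).
have e : m + (m'.-1 - m) = m'.-1 by lia.
rewrite e in g.
have := i1 m hmT; have := i2 m'.-1 ltac:(lia).
have := L_lo hmT; have := L_hi hmT; have := L_lo (i:=m'.-1) ltac:(lia);
have := L_hi (i:=m'.-1) ltac:(lia).
have em : m' = (m'.-1).+1 by lia.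
move: (m'.-1 - m) g e => d g e.
rewrite {2 4}em.
move=> a1 a2 a3 a4 /negP b1 /negP b2.
(* job m does not cover 2bm+z so u m > 2bm+z *)
have c1 : 2*b*m + z < u m.
  case: (ltnP (2*b*m + z) (u m)) => // c; exfalso; apply: b2; apply/andP; split; nia.
apply: b1; apply/andP; split; nia.
Qed.

Lemma F2 z : z < b -> exists m, m <= T.+1 /\ idle u T b (2*b*m+z).
Proof.
move=> hz.
suff H : forall k n, T.+1 - n <= k -> n <= T.+1 -> (forall i, i < n -> u i <= 2*b*i+z) ->
   exists m, m <= T.+1 /\ idle u T b (2*b*m+z).
  by apply: (H T.+1 0) => //; lia.
elim=> [|k IH] n hk hn hall.
  exists T.+1; split=> // i hi; apply/negP => /andP[_ h2].
  have := hall i ltac:(lia); nia.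
case: (leqP n T) => hnT; last first.
  exists T.+1; split=> // i hi; apply/negP => /andP[_ h2].
  have := hall i ltac:(lia); nia.
case: (leqP (u n) (2*b*n+z)) => hun.
  apply: (IH n.+1) => //; first lia.
  move=> i; rewrite ltnS leq_eqVlt => /orP[/eqP->//|]; exact: hall.
exists n; split; first lia.
move=> i hi; apply/negP => /andP[h1 h2].
case: (ltnP i n) => hin.
  have := hall i hin; nia.
case: (eqVneq i n) => [ein|nein]; first by subst; lia.
have := @L_gap (i - n) n ltac:(lia); rewrite subnKC //; nia.
Qed.

End Chain.
Definition cov (K : Type) (a y : K -> nat) k z := (y k <= z) && (z < y k + a k).

Lemma greedy (K : finType) (a y : K -> nat) (b : nat) :
 (forall k, 0 < a k) -> (forall k, y k + a k <= b) ->
 (forall z, z < b -> exists k1 k2, k1 != k2 /\ cov a y k1 z /\ cov a y k2 z) ->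
 (forall z k1 k2 k3, z < b -> cov a y k1 z -> cov a y k2 z -> cov a y k3 z ->
     k1 = k2 \/ k1 = k3 \/ k2 = k3) ->
 exists S : {set K}, \sum_(k in S) a k = b.
Proof.
move=> apos yb c2 c3.
suff H: forall n y0, b - y0 <= n -> y0 <= b -> (y0 = 0 \/ exists j, y j + a j = y0) ->
  exists S : {set K}, (forall k, k \in S -> y0 <= y k) /\ \sum_(k in S) a k = b - y0.
  have [S [_ HS]] := H b 0 (leq_subr _ _) (leq0n _) (or_introl erefl).
  by exists S; rewrite HS subn0.
elim=> [|n IH] y0 hn hy0 hst.
  have -> : y0 = b by lia.
  by exists set0; split=> [k|]; rewrite ?inE // big_set0 subnn.
have [->|ltb] := eqVneq y0 b.
  by exists set0; split=> [k|]; rewrite ?inE // big_set0 subnn.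
have lt : y0 < b by lia.
have [k yk] : exists k, y k = y0.
  case: hst => [->|[j hj]].
    have [k1 [k2 [_ [h1 _]]]] := c2 0 (leq_ltn_trans (leq0n _) lt).
    exists k1; move: h1; rewrite /cov; lia.
  have [k1 [k2 [ne [h1 h2]]]] := c2 _ lt.
  have aj := apos j.
  case E1: (y k1 == y0); first by exists k1; apply/eqP.
  case E2: (y k2 == y0); first by exists k2; apply/eqP.
  have cj : cov a y j y0.-1 by rewrite /cov; lia.
  have ck1 : cov a y k1 y0.-1 by move: h1 E1; rewrite /cov; move/eqP; lia.
  have ck2 : cov a y k2 y0.-1 by move: h2 E2; rewrite /cov; move/eqP; lia.
  have := c3 _ _ _ _ (leq_ltn_trans (leq_pred _) lt) cj ck1 ck2.
  move: h1 h2; rewrite /cov => h1 h2.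
  case=> [ejk|[ejk|ekk]].
  - by move: h1; rewrite -ejk; lia.
  - by move: h2; rewrite -ejk; lia.
  - by move: ne; rewrite ekk eqxx.
have ak := apos k.
have hk := yb k.
have [S [HS1 HS2]] := IH (y0 + a k) ltac:(lia) ltac:(lia) (or_intror (ex_intro _ k (congr1 (fun v => v + a k) yk))).
have kS : k \notin S.
  apply/negP => /HS1; lia.
exists (k |: S); split.
  move=> k'; rewrite !inE => /orP[/eqP->|/HS1]; lia.
rewrite big_setU1 //= HS2; lia.
Qed.
Lemma count_int M l p : \sum_(x < M) ((l <= x) && (x < l + p) : nat) = minn M (l+p) - minn M l.
Proof.
elim: M => [|M IH]; first by rewrite big_ord0; lia.
rewrite big_ord_recr /= IH; case: (leqP l M) => h1; case: (ltnP M (l+p)) => h2 /=; lia.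
Qed.

Lemma tight (f : nat -> nat) M : (forall x, x < M -> f x <= 2) ->
  2 * M <= \sum_(x < M) f x -> forall x, x < M -> f x = 2.
Proof.
elim: M => [|M IH] hf hs x hx //.
have hle : \sum_(x < M) f x <= 2 * M.
  have : \sum_(x < M) f x <= \sum_(x < M) 2.
    by apply: leq_sum => i _; apply: hf; exact: ltnW (ltn_ord i).
  by rewrite sum_nat_const card_ord mulnC.
move: hs; rewrite big_ord_recr /= => hs.
have fM := hf M (leqnn _).
case: (ltnP x M) => hxM.
  apply: IH => //; first by move=> y hy; apply: hf; lia.
  move: hs fM hle; set S := \sum_(i < M) f i; lia.
have -> : x = M by lia.
move: hs fM hle; set S := \sum_(i < M) f i; lia.
Qed.

Lemma sumC (I : finType) (S : {set I}) (F : I -> nat) :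
  \sum_(i in S) F i + \sum_(i in ~: S) F i = \sum_i F i.
Proof.
rewrite [RHS](bigID (mem S)) /=; congr (_ + _); apply: eq_bigl => i; by rewrite ?inE.
Qed.

Section Sched.
Variables (t b : nat) (a : 'I_t -> nat) (s : job t -> nat).
Hypothesis Hpos : forall i, 0 < a i.
Hypothesis Hsum : \sum_(i < t) a i = 2 * b.
Hypothesis Hprec : forall i j, prec i j -> s i + ptime b a i <= s j.
Hypothesis Hcap : forall x : nat, #|[pred j | (s j <= x) && (x < s j + ptime b a j)]| <= 2.
Hypothesis Hmk : forall j, s j + ptime b a j <= (2 * t + 3) * b.

Definition run x j := (s j <= x) && (x < s j + ptime b a j).

Lemma total : \sum_j ptime b a j = 2 * ((2 * t + 3) * b).
Proof.
rewrite big_sumType /= big_sumType /= Hsum !sum_nat_const !card_ord; lia.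
Qed.

Lemma full x : x < (2*t+3)*b -> #|[pred j | run x j]| = 2.
Proof.
move=> hx.
apply: (tight (f := fun x => #|[pred j | run x j]|)) hx.
  by move=> y _; apply: Hcap.
rewrite -total.
have E : forall y, #|[pred j | run y j]| = \sum_j (run y j : nat).
  by move=> y; rewrite -sum1_card big_mkcond /=; apply: eq_bigr => j _; rewrite inE; case: (run y j).
rewrite (eq_bigr _ (fun (y : ordinal _) _ => E y)).
rewrite exchange_big /=; apply: leq_sum => j _.
rewrite /run count_int; have := Hmk j; lia.
Qed.


Hypothesis bpos : 0 < b.
Let M := (2 * t + 3) * b.
Definition u1 m := s (inr (inl (inord m))).
Definition u2 m := s (inr (inr (inord m))).

Lemma hp1 i j : i < j -> j <= t -> u1 i + 2*b <= u1 j.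
Proof.
move=> hij hj; have := Hprec (i:=inr (inl (inord i))) (j:=inr (inl (inord j))).
rewrite /= !inordK; [by apply | lia | lia].
Qed.
Lemma hp2 i j : i < j -> j <= t -> u2 i + 2*b <= u2 j.
Proof.
move=> hij hj; have := Hprec (i:=inr (inr (inord i))) (j:=inr (inr (inord j))).
rewrite /= !inordK; [by apply | lia | lia].
Qed.
Lemma hm1 i : i <= t -> u1 i + 2*b <= (2*t+3)*b.
Proof. move=> _; exact: (Hmk (inr (inl (inord i)))). Qed.
Lemma hm2 i : i <= t -> u2 i + 2*b <= (2*t+3)*b.
Proof. move=> _; exact: (Hmk (inr (inr (inord i)))). Qed.

Lemma idle1_dec x : idle u1 t b x \/ exists m, run x (inr (inl m)).
Proof.
case: (boolP [exists m : 'I_t.+1, run x (inr (inl m))]) => [/existsP|/existsPn H]; first by right.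
left=> i hi; have := H (inord i); rewrite /run /u1 /=; by [].
Qed.
Lemma idle2_dec x : idle u2 t b x \/ exists m, run x (inr (inr m)).
Proof.
case: (boolP [exists m : 'I_t.+1, run x (inr (inr m))]) => [/existsP|/existsPn H]; first by right.
left=> i hi; have := H (inord i); rewrite /run /u2 /=; by [].
Qed.
Lemma idle1_run x m : idle u1 t b x -> ~~ run x (inr (inl m)).
Proof. move=> H; have := H m (ltn_ord m); by rewrite /u1 inord_val. Qed.
Lemma idle2_run x m : idle u2 t b x -> ~~ run x (inr (inr m)).
Proof. move=> H; have := H m (ltn_ord m); by rewrite /u2 inord_val. Qed.

Lemma prec_run x i j : prec i j -> run x i -> run x j -> False.
Proof. move=> /Hprec h /andP[h1 h2] /andP[h3 h4]; lia. Qed.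

Lemma G0 x k k' : run x (inl k) -> run x (inl k') -> k = k'.
Proof.
move=> h h'; case: (ltngtP k k') => c.
- by case: (prec_run (i:=inl k) (j:=inl k') c h h').
- by case: (prec_run (i:=inl k') (j:=inl k) c h' h).
- exact: val_inj.
Qed.
Lemma G01 x k k' : run x (inr (inl k)) -> run x (inr (inl k')) -> k = k'.
Proof.
move=> h h'; case: (ltngtP k k') => c.
- by case: (prec_run (i:=inr (inl k)) (j:=inr (inl k')) c h h').
- by case: (prec_run (i:=inr (inl k')) (j:=inr (inl k)) c h' h).
- exact: val_inj.
Qed.
Lemma G02 x k k' : run x (inr (inr k)) -> run x (inr (inr k')) -> k = k'.
Proof.
move=> h h'; case: (ltngtP k k') => c.
- by case: (prec_run (i:=inr (inr k)) (j:=inr (inr k')) c h h').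
- by case: (prec_run (i:=inr (inr k')) (j:=inr (inr k)) c h' h).
- exact: val_inj.
Qed.

Lemma G2 x k : run x (inl k) -> idle u1 t b x \/ idle u2 t b x.
Proof.
move=> h.
case: (idle1_dec x) => [|[m1 h1]]; first by left.
case: (idle2_dec x) => [|[m2 h2]]; first by right.
exfalso.
have : 2 < #|[pred j | run x j]|.
  apply/card_gt2P; exists (inl k), (inr (inl m1)), (inr (inr m2)); split; first by rewrite !inE.
  by split.
by rewrite ltnNge Hcap.
Qed.

Lemma two x : x < M -> exists j1 j2, [/\ run x j1, run x j2 & j1 != j2].
Proof.
move=> hx; have := full hx => e.
have : 1 < #|[pred j | run x j]| by rewrite e.
by case/card_gt1P => j1 [j2 [h1 h2 h3]]; exists j1, j2; split; rewrite -?topredE.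
Qed.

Lemma G3a x : x < M -> idle u1 t b x -> exists k, run x (inl k).
Proof.
move=> hx hi; have [j1 [j2 [h1 h2 ne]]] := two hx.
case: j1 h1 ne => [k1 h1 _|[m1|m1] h1 ne]; first by exists k1.
  by move: (idle1_run m1 hi); rewrite h1.
case: j2 h2 ne => [k2 h2 _|[m2|m2] h2 ne]; first by exists k2.
  by move: (idle1_run m2 hi); rewrite h2.
by move: ne; rewrite (G02 h1 h2) eqxx.
Qed.
Lemma G3b x : x < M -> idle u2 t b x -> exists k, run x (inl k).
Proof.
move=> hx hi; have [j1 [j2 [h1 h2 ne]]] := two hx.
case: j1 h1 ne => [k1 h1 _|[m1|m1] h1 ne]; first by exists k1.
  2: by move: (idle2_run m1 hi); rewrite h1.
case: j2 h2 ne => [k2 h2 _|[m2|m2] h2 ne]; first by exists k2.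
  2: by move: (idle2_run m2 hi); rewrite h2.
by move: ne; rewrite (G01 h1 h2) eqxx.
Qed.
Lemma Gboth x : x < M -> idle u1 t b x -> idle u2 t b x -> False.
Proof.
move=> hx i1 i2; have [j1 [j2 [h1 h2 ne]]] := two hx.
case: j1 h1 ne => [k1 h1 ne|[m1|m1] h1 ne].
2: by move: (idle1_run m1 i1); rewrite h1.
2: by move: (idle2_run m1 i2); rewrite h1.
case: j2 h2 ne => [k2 h2 ne|[m2|m2] h2 ne].
2: by move: (idle1_run m2 i1); rewrite h2.
2: by move: (idle2_run m2 i2); rewrite h2.
by move: ne; rewrite (G0 h1 h2) eqxx.
Qed.


Definition yk k := s (inl k) %% (2*b).
Definition mk k := s (inl k) %/ (2*b).

Lemma dec k : s (inl k) = 2*b*mk k + yk k.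
Proof. by rewrite /mk /yk mulnC -divn_eq. Qed.

Lemma runM x j : run x j -> x < M.
Proof. move=> /andP[_ h]; have := Hmk j; rewrite /M; lia. Qed.

Lemma G4 x k : run x (inl k) -> x %% (2*b) < b.
Proof.
move=> h; have hxM := runM h.
have e : x = 2*b*(x %/ (2*b)) + x %% (2*b) by rewrite mulnC -divn_eq.
have hr : x %% (2*b) < 2*b by rewrite ltn_pmod //; lia.
rewrite ltnNge; apply/negP => hge.
have hx' : 2*b*(x %/ (2*b)) + x %% (2*b) < (2*t+3)*b by rewrite -e.
case: (G2 h) => hi; rewrite e in hi.
- by apply: (F3 bpos hp1 hm1 _ hx' hi); rewrite hge hr.
- by apply: (F3 bpos hp2 hm2 _ hx' hi); rewrite hge hr.
Qed.

Lemma win k : yk k + a k <= b.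
Proof.
have ak := Hpos k.
have d := dec k.
have h0 : run (s (inl k)) (inl k) by rewrite /run /=; lia.
have y0 := G4 h0; rewrite -/(yk k) in y0.
rewrite leqNgt; apply/negP => hc.
have hr : run (s (inl k) + (b - yk k)) (inl k) by rewrite /run /=; lia.
have := G4 hr.
have -> : s (inl k) + (b - yk k) = mk k * (2*b) + b by rewrite d; lia.
by rewrite modnMDl modn_small ?ltnn //; lia.
Qed.

Lemma cov_run k z : cov a yk k z -> run (2*b*mk k + z) (inl k).
Proof. have d := dec k; rewrite /cov /run /= => /andP[h1 h2]; rewrite d; apply/andP; split; lia. Qed.

Lemma run_cov k m z : z < b -> run (2*b*m + z) (inl k) -> cov a yk k z /\ m = mk k.
Proof.
move=> hz; have d := dec k; have w := win k; rewrite /run /= d => /andP[h1 h2].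
have em : m = mk k.
  case: (ltngtP m (mk k)) => // c; exfalso.
  - have : 2*b*m.+1 <= 2*b*mk k by rewrite leq_mul2l c orbT.
    rewrite mulnS; lia.
  - have : 2*b*(mk k).+1 <= 2*b*m by rewrite leq_mul2l c orbT.
    rewrite mulnS; lia.
split=> //; subst m; rewrite /cov; lia.
Qed.

Lemma C2 z : z < b -> exists k1 k2, k1 != k2 /\ cov a yk k1 z /\ cov a yk k2 z.
Proof.
move=> hz.
have [m1 [hm1' i1]] := F2 bpos hp1 hz.
have [m2 [hm2' i2]] := F2 bpos hp2 hz.
have x1M : 2*b*m1 + z < M.
  have : 2*b*m1 <= 2*b*t.+1 by rewrite leq_mul2l hm1' orbT.
  rewrite /M mulnS; nia.
have x2M : 2*b*m2 + z < M.
  have : 2*b*m2 <= 2*b*t.+1 by rewrite leq_mul2l hm2' orbT.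
  rewrite /M mulnS; nia.
have [k1 r1] := G3a x1M i1.
have [k2 r2] := G3b x2M i2.
have [c1 e1] := run_cov hz r1.
have [c2 e2] := run_cov hz r2.
exists k1, k2; split => //.
apply/negP => /eqP ek; subst k2.
apply: (Gboth x1M i1); by rewrite e1 -e2.
Qed.

Lemma same (u : nat -> nat)
  (F : forall z m m', z < b -> m < m' -> 2*b*m' + z < (2*t+3)*b ->
        idle u t b (2*b*m+z) -> idle u t b (2*b*m'+z) -> False)
  z k k' : z < b -> cov a yk k z -> cov a yk k' z ->
  idle u t b (2*b*mk k + z) -> idle u t b (2*b*mk k' + z) -> k = k'.
Proof.
move=> hz c c' i i'.
have r := cov_run c; have r' := cov_run c'.
case: (ltngtP (mk k) (mk k')) => h.
- by case: (F _ _ _ hz h (runM r') i i').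
- by case: (F _ _ _ hz h (runM r) i' i).
- by rewrite h in r; exact: G0 r r'.
Qed.

Lemma C3 z k1 k2 k3 : z < b -> cov a yk k1 z -> cov a yk k2 z -> cov a yk k3 z ->
  k1 = k2 \/ k1 = k3 \/ k2 = k3.
Proof.
move=> hz c1 c2 c3.
have S1 := same (F1 bpos hp1 hm1) hz.
have S2 := same (F1 bpos hp2 hm2) hz.
case: (G2 (cov_run c1)) => i1; case: (G2 (cov_run c2)) => i2;
  case: (G2 (cov_run c3)) => i3.
all: first [ left; by [apply: S1 | apply: S2]
           | right; left; by [apply: S1 | apply: S2]
           | right; right; by [apply: S1 | apply: S2] ].
Qed.

Lemma hard : exists S : {set 'I_t}, \sum_(i in S) a i = \sum_(i in ~: S) a i.
Proof.
have [S HS] := greedy Hpos win C2 C3.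
exists S; have := sumC S a; rewrite Hsum HS => h; apply/eqP; rewrite -(eqn_add2l b) h addnn mul2n. by apply/eqP.
Qed.

End Sched.

Section Pref.
Variables (t : nat) (a : 'I_t -> nat) (Q : pred 'I_t).
Definition pre m := \sum_(i < t) (if (i < m) && Q i then a i else 0).

Lemma pre_mono m m' : m <= m' -> pre m <= pre m'.
Proof.
move=> h; apply: leq_sum => i _.
case: (ltnP i m) => h1 /=; last by case: ifP.
have -> : i < m' by lia.
by [].
Qed.

Lemma pre_bound m : pre m <= \sum_(i | Q i) a i.
Proof.
rewrite big_mkcond /=; apply: leq_sum => i _.
by case: (i < m); case: (Q i).
Qed.

Lemma pre_step (k : 'I_t) : pre k.+1 = pre k + (if Q k then a k else 0).
Proof.
rewrite /pre (bigD1 k) //= [X in _ = X + _](bigD1 k) //= ltnn ltnSn /= add0n.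
rewrite addnC; congr (_ + _); apply: eq_bigr => i /negbTE ne.
have : (i : nat) != k by rewrite -(inj_eq val_inj) in ne; rewrite ne.
rewrite ltnS leq_eqVlt => /negbTE ->; by [].
Qed.
End Pref.

Section Easy.
Variables (t b : nat) (a : 'I_t -> nat) (S : {set 'I_t}).
Hypothesis Hpos : forall i, 0 < a i.
Hypothesis HS1 : \sum_(i in S) a i = b.
Hypothesis HS2 : \sum_(i in ~: S) a i = b.

Definition Sp := pre a (mem S).
Definition Np := pre a (mem (~: S)).

Lemma Sp_b m : Sp m <= b.
Proof. rewrite -HS1; exact: pre_bound. Qed.
Lemma Np_b m : Np m <= b.
Proof. rewrite -HS2; exact: pre_bound. Qed.

Definition sch (j : job t) : nat :=
  match j with
  | inl k => 2*b*k.+1 + (if k \in S then Sp k else Np k)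
  | inr (inl m) => 2*b*m + Sp m
  | inr (inr m) => 2*b*m + Np m
  end.

Lemma mul2b m n : m <= n -> 2*b*m <= 2*b*n.
Proof. by move=> h; rewrite leq_mul2l h orbT. Qed.

Lemma endk (k : 'I_t) : sch (inl k) + a k <= 2*b*k.+1 + b.
Proof.
rewrite /=; case: ifP => h.
- have := pre_step a (mem S) k; rewrite /= h => e.
  have := Sp_b k.+1; rewrite /Sp e; set P := pre a (mem S) k; lia.
- have := pre_step a (mem (~: S)) k; rewrite /= inE h => e.
  have := Np_b k.+1; rewrite /Np e /=; set P := pre a (mem (~: S)) k; lia.
Qed.

Lemma sch_prec i j : prec i j -> sch i + ptime b a i <= sch j.
Proof.
case: i => [k|[m|m]]; case: j => [k'|[m'|m']] //= h.
- have := endk k; have := mul2b (m:=k.+2) (n:=k'.+1) h; rewrite /= mulnS; lia.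
- have := pre_mono a (mem S) (ltnW h); have := mul2b (m:=m.+1) (n:=m') h.
  rewrite mulnS /Sp; lia.
- have := pre_mono a (mem (~: S)) (ltnW h); have := mul2b (m:=m.+1) (n:=m') h.
  rewrite mulnS /Np; lia.
Qed.

Lemma sch_mk j : sch j + ptime b a j <= (2*t+3)*b.
Proof.
case: j => [k|[m|m]].
- have := endk k; have := mul2b (ltn_ord k); rewrite /= mulnS; nia.
- have := Sp_b m; have := mul2b (ltnSE (ltn_ord m)); rewrite /=; nia.
- have := Np_b m; have := mul2b (ltnSE (ltn_ord m)); rewrite /=; nia.
Qed.

Definition srun x j := (sch j <= x) && (x < sch j + ptime b a j).

Lemma srun_prec x i j : prec i j -> srun x i -> srun x j -> False.
Proof. move=> /sch_prec h /andP[h1 h2] /andP[h3 h4]; lia. Qed.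

Lemma srun_same x i j : srun x i -> srun x j -> i != j ->
  (exists k k', i = inl k /\ j = inl k') \/
  (exists k k', i = inr (inl k) /\ j = inr (inl k')) \/
  (exists k k', i = inr (inr k) /\ j = inr (inr k')) -> False.
Proof.
move=> hi hj ne [[k [k' [Ei Ej]]]|[[k [k' [Ei Ej]]]|[k [k' [Ei Ej]]]]]; subst i j.
- case: (ltngtP k k') => c.
  + exact: (srun_prec (i:=inl k) (j:=inl k') c hi hj).
  + exact: (srun_prec (i:=inl k') (j:=inl k) c hj hi).
  + by move: ne; rewrite (val_inj c) eqxx.
- case: (ltngtP k k') => c.
  + exact: (srun_prec (i:=inr (inl k)) (j:=inr (inl k')) c hi hj).
  + exact: (srun_prec (i:=inr (inl k')) (j:=inr (inl k)) c hj hi).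
  + by move: ne; rewrite (val_inj c) eqxx.
- case: (ltngtP k k') => c.
  + exact: (srun_prec (i:=inr (inr k)) (j:=inr (inr k')) c hi hj).
  + exact: (srun_prec (i:=inr (inr k')) (j:=inr (inr k)) c hj hi).
  + by move: ne; rewrite (val_inj c) eqxx.
Qed.

Lemma triple x k m1 m2 : srun x (inl k) -> srun x (inr (inl m1)) -> srun x (inr (inr m2)) -> False.
Proof.
move=> h0 h1 h2.
case: (boolP (k \in S)) => kS.
- move: h0 h1; rewrite /srun /= kS => /andP[c1 c2] /andP[d1 d2].
  have st := pre_step a (mem S) k; rewrite /= kS in st.
  case: (leqP (m1 : nat) k) => c.
  + have := pre_mono a (mem S) c; have := mul2b (m:=m1.+1) (n:=k.+1) c.
    rewrite /Sp in d1 d2 c1 c2 *; rewrite mulnS; lia.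
  + have := pre_mono a (mem S) c; have := mul2b (m:=k.+1) (n:=m1) c.
    rewrite /Sp in d1 d2 c1 c2 *; rewrite st.
    set P1 := pre a (mem S) m1; set P0 := pre a (mem S) k; set B := 2*b*m1; set C := 2*b*k.+1.
    lia.
- move: h0 h2; rewrite /srun /= (negbTE kS) => /andP[c1 c2] /andP[d1 d2].
  have st := pre_step a (mem (~: S)) k; rewrite /= inE kS in st.
  case: (leqP (m2 : nat) k) => c.
  + have := pre_mono a (mem (~: S)) c; have := mul2b (m:=m2.+1) (n:=k.+1) c.
    rewrite /Np in d1 d2 c1 c2 *; rewrite mulnS; lia.
  + have := pre_mono a (mem (~: S)) c; have := mul2b (m:=k.+1) (n:=m2) c.
    rewrite /Np in d1 d2 c1 c2 *; rewrite st.
    set P1 := pre a (mem (~: S)) m2; set P0 := pre a (mem (~: S)) k; set B := 2*b*m2; set C := 2*b*k.+1.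
    lia.
Qed.

Lemma sch_cap x : #|[pred j | (sch j <= x) && (x < sch j + ptime b a j)]| <= 2.
Proof.
rewrite leqNgt; apply/negP => /card_gt2P [j1 [j2 [j3 [[h1 h2 h3] [n12 n23 n31]]]]].
rewrite !inE -/(srun x j1) -/(srun x j2) -/(srun x j3) in h1 h2 h3.
case: j1 h1 n12 n31 => [k1|[k1|k1]] h1 n12 n31;
case: j2 h2 n12 n23 => [k2|[k2|k2]] h2 n12 n23;
case: j3 h3 n23 n31 => [k3|[k3|k3]] h3 n23 n31;
  first [ exact: (triple h1 h2 h3) | exact: (triple h1 h3 h2) | exact: (triple h2 h1 h3)
        | exact: (triple h2 h3 h1) | exact: (triple h3 h1 h2) | exact: (triple h3 h2 h1)
        | apply: (srun_same h1 h2 n12); by [left; eauto | right; left; eauto | right; right; eauto]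
        | apply: (srun_same h2 h3 n23); by [left; eauto | right; left; eauto | right; right; eauto]
        | apply: (srun_same h3 h1 n31); by [left; eauto | right; left; eauto | right; right; eauto] ].
Qed.

Lemma easy : exists s : job t -> nat,
     feasible2 (ptime b a) (@prec t) s /\ makespan_le (ptime b a) s ((2 * t + 3) * b).
Proof.
exists sch; split; [split; [exact: sch_prec | exact: sch_cap] | exact: sch_mk].
Qed.
End Easy.

Theorem mainTheorem2 (t b : nat) (a : 'I_t -> nat)
  (Hpos : forall i, 0 < a i) (Hsum : \sum_(i < t) a i = 2 * b) :
  (exists S : {set 'I_t}, \sum_(i in S) a i = \sum_(i in ~: S) a i) <->
  (exists s : job t -> nat,
     feasible2 (ptime b a) (@prec t) s /\
     makespan_le (ptime b a) s ((2 * t + 3) * b)).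
Proof.
split.
- case=> S HS.
  have H := sumC S a; rewrite Hsum -HS in H.
  have H1 : \sum_(i in S) a i = b by lia.
  have H2 : \sum_(i in ~: S) a i = b by rewrite -HS.
  exact: (easy H1 H2).
- case=> s [[Hp Hc] Hm].
  case: (posnP b) => hb.
    exists set0; rewrite big_set0 setC0.
    have -> : \sum_(i in [set: 'I_t]) a i = \sum_(i < t) a i by apply: eq_bigl => i; rewrite inE.
    by rewrite Hsum hb.
  exact: (hard Hpos Hsum Hp Hc Hm hb).
Qed.
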